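(* Let $A_0\in\mathbb{R}^{n\times n}$, $B\in\mathbb{R}^{n\times1}$, $K\in\mathbb{R}^{1\times n}$, and let $P_0\succeq0$ be symmetric with $A_0^\top P_0+P_0A_0\preceq0$, $\ker P_0\subseteq\ker A_0$, and $P_0$ not of full rank. If $h,\mu\in\mathbb{R}$ satisfy $P_0B-hA_0^\top K^\top=\mu K^\top$ and $P_0+hK^\top K\succ0$, then $\mu=0$. *)

(* Defs.v *)
From mathcomp Require Import all_boot all_order all_algebra.
From mathcomp Require Import reals.
Set Implicit Arguments. Unset Strict Implicit. Unset Printing Implicit Defensive.
Import Order.TTheory GRing.Theory Num.Theory.
Local Open Scope ring_scope.

Definition qform (R : realType) (n : nat) (M : 'M[R]_n) (x : 'cV[R]_n) : R :=
  (x^T *m M *m x) ord0 ord0.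

Definition psdmx (R : realType) (n : nat) (M : 'M[R]_n) : Prop :=
  forall x : 'cV[R]_n, 0 <= qform M x.
Definition nsdmx (R : realType) (n : nat) (M : 'M[R]_n) : Prop :=
  forall x : 'cV[R]_n, qform M x <= 0.
Definition pdmx (R : realType) (n : nat) (M : 'M[R]_n) : Prop :=
  forall x : 'cV[R]_n, x != 0 -> 0 < qform M x.

(* Main.v *)
Require Import Defs.
From mathcomp Require Import all_boot all_order all_algebra.
From mathcomp Require Import reals.
Import Order.TTheory GRing.Theory Num.Theory.
Local Open Scope ring_scope.

Theorem mainTheorem6 (R : realType) (n : nat)
    (A0 : 'M[R]_n) (B : 'cV[R]_n) (K : 'rV[R]_n) (P0 : 'M[R]_n)
    (h mu : R) :
  P0^T = P0 ->
  psdmx P0 ->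
  nsdmx (A0^T *m P0 + P0 *m A0) ->
  (forall x : 'cV[R]_n, P0 *m x = 0 -> A0 *m x = 0) ->
  (\rank P0 < n)%N ->
  P0 *m B - h *: (A0^T *m K^T) = mu *: K^T ->
  pdmx (P0 + h *: (K^T *m K)) ->
  mu = 0.
Proof.
move=> Psym _ _ Hker Hrk E Hpd.
have kerNZ : kermx P0 != 0.
  apply/negP => /eqP H0.
  have := mxrank_ker P0; rewrite H0 mxrank0 => /esym/eqP.
  by rewrite subn_eq0 leqNgt Hrk.
have [i Hi] : exists i, row i (kermx P0) != 0.
  apply/existsP; apply: contraR kerNZ; rewrite negb_exists => /forallP Hall.
  apply/eqP/row_matrixP => i; rewrite row0; apply/eqP.
  by have := Hall i; rewrite negbK.
set u := row i (kermx P0) in Hi.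
have uP : u *m P0 = 0 by rewrite /u -row_mul mulmx_ker row0.
set v := u^T.
have vnz : v != 0 by rewrite /v trmx_eq0.
have Pv : P0 *m v = 0 by rewrite /v -{1}Psym -trmx_mul uP trmx0.
have Av : A0 *m v = 0 by apply: Hker.
have vP : v^T *m P0 = 0 by rewrite -{1}Psym -trmx_mul Pv trmx0.
have vA : v^T *m A0^T = 0 by rewrite -trmx_mul Av trmx0.
have E2 := congr1 (mulmx v^T) E.
rewrite mulmxBr mulmxA vP mul0mx -scalemxAr mulmxA vA mul0mx scaler0 subr0 in E2.
rewrite -scalemxAr in E2.
apply/eqP; apply: contraT => mu0.
have Kv : K *m v = 0.
  have : v^T *m K^T = 0.
    apply/eqP; move/eqP: E2; rewrite eq_sym scalemx_eq0 (negbTE mu0) /=.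
    by [].
  by move/(congr1 trmx); rewrite trmx_mul !trmxK trmx0.
have := Hpd v vnz; rewrite /qform mulmxDr mulmxDl vP mul0mx add0r.
rewrite -scalemxAr -scalemxAl -!mulmxA Kv !mulmx0 scaler0 mxE ltxx.
by [].
Qed.
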